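(* There is no opaque history $H$ (well-formed, with unique writes) containing a transaction $T_i$ that releases some variable $x$ early in $H$. Consequently opacity supports neither overwriting nor aborting early release.
   Context: Model. Shared variables have domain $\mathbb{N}_0$ and initial value $0$. A transaction $T_i$ executes $\mathit{init}_i$, $\mathit{read}_i(x)$ (returns a value or $A_i$), $\mathit{write}_i(x,v)$ (returns $ok_i$ or $A_i$), $\mathit{tryC}_i$ (returns $C_i$ or $A_i$), possibly $\mathit{tryA}_i$; each operation is an invocation and a response event. A history is a sequence of such events, $H|T_i$ the events of $T_i$; histories are well-formed and have unique writes (no value written twice to a variable, $0$ never written). $T_i$ is committed if $H|T_i$ contains $\mathit{tryC}_i\to C_i$, aborted if it contains a response $A_i$, commit-pending if it contains the invocation of $\mathit{tryC}_i$ without a $C_i/A_i$ response, live otherwise. A completion $\mathrm{Compl}(H)$ extends $H$ so that commit-pending transactions get response $C_i$, those with another pending operation get response $A_i$, other live ones get $\mathit{tryC}_i\to A_i$ (so live transactions become aborted). Equivalence: same per-transaction subhistories. Real-time order: $T_i\prec_H T_j$ iff the last event of $T_i$ precedes the first of $T_j$; $S$ preserves the real-time order of $H$ if $\prec_H\subseteq\prec_S$; sequential history: no two transactions concurrent. $\mathit{Seq}(x)$: sequences of complete operation executions on $x$ where each read returning a value returns the most recent preceding written value, or $0$ if none; sequential $S'$ legal iff $S'|x\in\mathit{Seq}(x)$ for all $x$. $\mathrm{vis}(S,T_i)$: longest subhistory of sequential $S$ consisting of $S|T_j$ for $j=i$ or $T_j$ committed in $S$ with $T_j\prec_S T_i$;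 $T_i$ legal in $S$ iff $\mathrm{vis}(S,T_i)$ legal. A finite $H$ is final-state opaque iff there is a sequential $S$ equivalent to some completion of $H$, preserving the real-time order of $H$, in which every transaction is legal. $H$ is opaque iff every finite prefix is final-state opaque. Early release: $T_i$ releases $x$ early in $H$ iff some prefix $P$ of $H$ has $T_i$ live in $P$ and some $T_j$ with a complete read $r_j(x)\to v$ in $P|T_j$, not preceded in $P|T_j$ by a write on $x$, preceded in $P$ by a write $w_i(x,v)$ of $T_i$. Supporting overwriting and supporting aborting early release both require (by definition) supporting early release. *)

(* Defs.v *)
From mathcomp Require Import all_boot.
Set Implicit Arguments. Unset Strict Implicit. Unset Printing Implicit Defensive.

Inductive op : Type :=
  | OInit
  | ORead  (x : nat)
  | OWrite (x v : nat)
  | OTryC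
  | OTryA.

Inductive res : Type :=
  | ROk
  | RVal (v : nat)
  | RCommit
  | RAbort.

Inductive event : Type :=
  | Inv  (i : nat) (o : op)
  | Resp (i : nat) (r : res).

Definition history := seq event.

Definition txid (e : event) : nat := match e with Inv i _ => i | Resp i _ => i end.

Definition sub (H : history) (i : nat) : history := [seq e <- H | txid e == i].

Definition occurs (H : history) (i : nat) : bool := has (fun e => txid e == i) H.

Definition resp_ok (o : op) (r : res) : bool :=
  match o, r with
  | OInit, ROk | OInit, RAbort => true
  | ORead _, RVal _ | ORead _, RAbort => true
  | OWrite _ _, ROk | OWrite _ _, RAbort => true
  | OTryC, RCommit | OTryC, RAbort => true
  | OTryA, RAbort => true
  | _, _ => false
  end.

Definition is_final (r : res) : bool :=
  match r with RCommit | RAbort => true | _ => false end.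

Definition is_init (o : op) : bool := if o is OInit then true else false.

(** A per-transaction subhistory alternates invocations and matching responses,
    starts with init, ends at the latest with C_i / A_i, and possibly has one
    last pending invocation. *)
Fixpoint wf_tx (first : bool) (s : history) : bool :=
  match s with
  | [::] => true
  | Inv _ o :: s' =>
      (if first then is_init o else ~~ is_init o) &&
      match s' with
      | [::] => true
      | Resp _ r :: s'' =>
          resp_ok o r && (if is_final r then nilp s'' else wf_tx false s'')
      | Inv _ _ :: _ => false
      end
  | Resp _ _ :: _ => false
  end.

Definition well_formed (H : history) : Prop := forall i, wf_tx true (sub H i).

Definition write_inv (e : event) : option (nat * nat) :=
  match e with Inv _ (OWrite x v) => Some (x, v) | _ => None end.

Definition unique_writes (H : history) : bool :=
  uniq (pmap write_inv H) && all (fun xv => xv.2 != 0) (pmap write_inv H).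

Definition is_commit_ev (e : event) : bool :=
  match e with Resp _ RCommit => true | _ => false end.
Definition is_abort_ev (e : event) : bool :=
  match e with Resp _ RAbort => true | _ => false end.
Definition is_tryC_inv (e : event) : bool :=
  match e with Inv _ OTryC => true | _ => false end.

Definition committed (s : history) : bool := has is_commit_ev s.
Definition aborted (s : history) : bool := has is_abort_ev s.
Definition commit_pending (s : history) : bool :=
  [&& has is_tryC_inv s, ~~ committed s & ~~ aborted s].
Definition live (s : history) : bool :=
  [&& ~~ committed s, ~~ aborted s & ~~ commit_pending s].

Definition last_is_inv (s : history) : bool :=
  match last (Resp 0 ROk) s with Inv _ _ => true | _ => false end.

Definition compl_tx (i : nat) (s : history) : history :=
  if [|| nilp s, committed s | aborted s] then s
  else if commit_pending s then rcons s (Resp i RCommit)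
  else if last_is_inv s then rcons s (Resp i RAbort)
  else s ++ [:: Inv i OTryC; Resp i RAbort].

Definition is_completion (H C : history) : Prop :=
  exists E, C = H ++ E /\ forall i, sub C i = compl_tx i (sub H i).

Definition equivalent (H1 H2 : history) : Prop := forall i, sub H1 i = sub H2 i.

(** T_i <_H T_j : the last event of T_i precedes the first event of T_j. *)
Definition prec (H : history) (i j : nat) : bool :=
  [&& occurs H i, occurs H j &
      ~~ has (fun e => txid e == i) (drop (find (fun e => txid e == j) H) H)].

Definition preserves_rt (S H : history) : Prop :=
  forall i j, prec H i j -> prec S i j.

Definition sequential (S : history) : Prop :=
  forall i j, i <> j -> occurs S i -> occurs S j -> prec S i j \/ prec S j i.

Definition vis (S : history) (i : nat) : history :=
  [seq e <- S | (txid e == i) || (committed (sub S (txid e)) && prec S (txid e) i)].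

(** The complete operation executions of a history, in order of invocation:
    an invocation paired with the next event of the same transaction, if that
    is a response. *)
Fixpoint execs (s : history) : seq (op * res) :=
  match s with
  | [::] => [::]
  | Inv i o :: s' =>
      match ohead [seq e <- s' | txid e == i] with
      | Some (Resp _ r) => (o, r) :: execs s'
      | _ => execs s'
      end
  | Resp _ _ :: s' => execs s'
  end.

Definition on_var (x : nat) (e : op * res) : bool :=
  match e.1 with ORead y => y == x | OWrite y _ => y == x | _ => false end.

(** Membership in Seq(x): every read returning a value returns the most
    recently written value (by a successful write), or 0 if none. *)
Fixpoint seq_legal (cur : nat) (l : seq (op * res)) : bool :=
  match l with
  | [::] => true
  | (ORead _, RVal v) :: l' => (v == cur) && seq_legal cur l'
  | (OWrite _ v, ROk) :: l' => seq_legal v l'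
  | _ :: l' => seq_legal cur l'
  end.

Definition legal (S : history) : Prop :=
  forall x, seq_legal 0 [seq e <- execs S | on_var x e].

Definition tx_legal (S : history) (i : nat) : Prop := legal (vis S i).

Definition final_state_opaque (H : history) : Prop :=
  exists C S, [/\ is_completion H C, equivalent S C, sequential S,
                  preserves_rt S H & forall i, occurs S i -> tx_legal S i].

Definition opaque (H : history) : Prop :=
  forall n, final_state_opaque (take n H).

Definition is_write_on (x : nat) (e : event) : bool :=
  match e with Inv _ (OWrite y _) => y == x | _ => false end.

(** T_i releases x early in H: in some prefix P, T_i is live and some T_j has
    a complete read r_j(x) -> v (invocation at q, response at r, no event of
    T_j in between), not preceded in P|T_j by a write of T_j on x, and
    preceded in P by the invocation of a write w_i(x,v) of T_i (at p < q). *)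
Definition releases_early (H : history) (i x : nat) : Prop :=
  exists n, let P := take n H in
  live (sub P i) /\
  exists j v p q r,
    [/\ p < q, q < r, r < size P,
        nth (Resp 0 ROk) P p = Inv i (OWrite x v) &
        nth (Resp 0 ROk) P q = Inv j (ORead x)] /\
    [/\ nth (Resp 0 ROk) P r = Resp j (RVal v),
        ~~ has (fun e => txid e == j) (take (r - q.+1) (drop q.+1 P)) &
        ~~ has (fun e => (txid e == j) && is_write_on x e) (take q P)].

(* Main.v *)
Require Import Defs.
From mathcomp Require Import all_boot.
From Corelib Require Import Setoid.
Set Implicit Arguments.

Fixpoint In' {T : Type} (e : T) (l : seq T) : Prop :=
  match l with [::] => False | h :: t => h = e \/ In' e t end.

Lemma In'_cat T (e : T) a b : In' e (a ++ b) <-> In' e a \/ In' e b.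
Proof. elim: a => [|h t IH] /=; first by split; [right|case]. move: IH; tauto. Qed.

Lemma In'_filter T (p : pred T) e s : In' e (filter p s) <-> p e /\ In' e s.
Proof.
elim: s => [|h t IH] /=; first by split; [|case].
case ph: (p h) => /=; split.
- case=> [<-|/IH []]; auto.
- case=> pe [<-|Ht]; auto. right; apply/IH; auto.
- move=> /IH []; auto.
- case=> pe [E|Ht]; [subst; by rewrite ph in pe|apply/IH; auto].
Qed.

Lemma In'_take T (e : T) n s : In' e (take n s) -> In' e s.
Proof. elim: s n => [|h t IH] [|n] //= [->|H]; eauto. Qed.

Lemma In'_nth T (d : T) s n : n < size s -> In' (nth d s n) s.
Proof. elim: s n => [|h t IH] [|n] //= Hn; auto. Qed.

Lemma In'_has T (p : pred T) e s : In' e s -> p e -> has p s.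
Proof. elim: s => [|h t IH] //= [->|H] pe; first by rewrite pe. by rewrite IH ?orbT. Qed.

Lemma In'_all T (p : pred T) e s : all p s -> In' e s -> p e.
Proof. elim: s => [|h t IH] //= /andP[ph pt] [<-|H]; auto. Qed.

Lemma In'_pmap aT rT (f : aT -> option rT) a y s :
  In' a s -> f a = Some y -> In' y (pmap f s).
Proof.
elim: s => [|h t IH] //= [<-|H] fa; first by rewrite fa /=; left.
case: (f h) => [z|] /=; auto.
Qed.

Lemma In'_mem (T : eqType) (e : T) s : In' e s -> e \in s.
Proof. elim: s => [|h t IH] //= [->|H]; rewrite inE ?eqxx //. by rewrite IH ?orbT. Qed.

Lemma uniq_pmap_inj aT (rT : eqType) (f : aT -> option rT) s a b y :
  uniq (pmap f s) -> In' a s -> In' b s -> f a = Some y -> f b = Some y -> a = b.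
Proof.
elim: s => [|h t IH] //=.
case fh: (f h) => [z|] /=; last by move=> U [<-|Ha] [<-|Hb]; [done|congruence|congruence|eauto].
move=> /andP[nz U] [Ea|Ha] [Eb|Hb] fa fb; subst => //.
- have Hy : y \in pmap f t by apply: In'_mem; exact: (@In'_pmap _ _ f _ y t Hb fb).
  by move: fh nz; rewrite fa => -[<-]; rewrite Hy.
- have Hy : y \in pmap f t by apply: In'_mem; exact: (@In'_pmap _ _ f _ y t Ha fa).
  by move: fh nz; rewrite fb => -[<-]; rewrite Hy.
- eauto.
Qed.

Lemma filter_nil T (p : pred T) s : ~~ has p s -> filter p s = [::].
Proof. elim: s => [|h t IH] //=; case: (p h) => //= /IH. Qed.

Lemma seq_legal_read l cur y v :
  seq_legal cur l -> In' (ORead y, RVal v) l ->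
  v = cur \/ exists y', In' (OWrite y' v, ROk) l.
Proof.
elim: l cur => [|[o r] l IH] cur //=.
case: o => [|z|z w||]; case: r => [|w'||] /= L [E|Hin];
  try discriminate;
  try (case: (IH _ L Hin) => [->|[y' Hy]]; by [left|right; exists y'; right]);
  try (case: E => _ <-; move/andP: L => [/eqP -> _]; by left).
- move/andP: L => [_ L]. case: (IH _ L Hin) => [->|[y' Hy]]; by [left|right; exists y'; right].
- case: (IH _ L Hin) => [->|[y' Hy]]; [right; exists z; left; done|right; exists y'; right; done].
Qed.

Lemma execs_mono e s p : In' p (execs s) -> In' p (execs (e :: s)).
Proof.
case: e => [k o|k r] //= H.
case: (ohead _) => [[k' o'|k' r']|] //=; auto.
Qed.

Lemma sub_cons s e j : sub (e :: s) j = if txid e == j then e :: sub s j else sub s j.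
Proof. by []. Qed.

Lemma execs_consec s j o r a b :
  sub s j = a ++ Inv j o :: Resp j r :: b -> In' (o, r) (execs s).
Proof.
elim: s a => [|e s IH] a; first by case: a.
rewrite sub_cons; case: eqP => Ej.
- case: a => [|a0 a'] /=.
  + move=> [-> Hs]. rewrite /=. change [seq e0 <- s | txid e0 == j] with (sub s j).
    by rewrite Hs /=; left.
  + move=> [_ Hs]; apply: execs_mono; exact: IH Hs.
- move=> Hs; apply: execs_mono; exact: IH Hs.
Qed.

Lemma execs_inv s o r : In' (o, r) (execs s) -> exists k, In' (Inv k o) s.
Proof.
elim: s => [|e s IH] //=. case: e => [k o'|k r'] /=.
- case: (ohead _) => [[k' o''|k' r'']|] /=; try (move=> /IH [k0 H]; exists k0; by right).
  case=> [[<- _]|/IH [k0 H]]; [exists k; by left|exists k0; by right].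
- move=> /IH [k0 H]; exists k0; by right.
Qed.

Lemma compl_prefix k s : exists t, compl_tx k s = s ++ t.
Proof.
rewrite /compl_tx. case: ifP => _; first by exists [::]; rewrite cats0.
case: ifP => _; first by eexists; rewrite -cats1.
case: ifP => _; first by eexists; rewrite -cats1.
by eexists.
Qed.

Lemma compl_in k s k' y v : In' (Inv k' (OWrite y v)) (compl_tx k s) -> In' (Inv k' (OWrite y v)) s.
Proof.
rewrite /compl_tx. case: ifP => _ //.
case: ifP => _; first by rewrite -cats1 In'_cat => -[//|[//|[]]].
case: ifP => _; first by rewrite -cats1 In'_cat => -[//|[//|[]]].
by rewrite In'_cat => -[//|[//|[//|[]]]].
Qed.

Lemma compl_not_committed k s : live s -> committed (compl_tx k s) = false.
Proof.
move/and3P=> [nc na ncp]. rewrite /compl_tx (negbTE nc) (negbTE na) (negbTE ncp) orbF.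
case: ifP => _; first exact: negbTE.
case: ifP => _; first by rewrite /committed -cats1 has_cat /= orbF; exact: negbTE.
by rewrite /committed has_cat /= orbF; exact: negbTE.
Qed.

Lemma sub_vis S j : sub (vis S j) j = sub S j.
Proof.
rewrite /sub /vis -filter_predI. apply: eq_filter => e /=.
by case: (txid e == j).
Qed.

Unset Implicit Arguments.
Theorem mainTheorem4 (H : history) (i x : nat) :
  well_formed H -> unique_writes H -> opaque H -> ~ releases_early H i x.
Proof.
move=> _ /andP[U NZ] Op [n /=].
set P := take n H.
move=> [Hlive [j [v [p [q [r [[pq qr rP Ep Eq] [Er Hmid Hnw]]]]]]]].
have [C [S [[E [HC HsubC]] Heq Hseq Hrt Hleg]]] := Op n.
rewrite -/P in HC HsubC.
have qP : q < size P by apply: ltn_trans qr rP.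
have pP : p < size P by apply: ltn_trans pq qP.
have Wi : In' (Inv i (OWrite x v)) H.
  by apply: (@In'_take _ _ n); rewrite -/P -Ep; apply: In'_nth.
have v0 : v != 0.
  exact: (@In'_all _ _ _ _ NZ (@In'_pmap _ _ write_inv _ (x,v) _ Wi erefl)).
have ij : i != j.
  apply/negP=> /eqP Eij; subst j. move/negP: Hnw; apply.
  apply: (@In'_has _ _ (Inv i (OWrite x v))); last by rewrite /= !eqxx.
  rewrite -Ep -(nth_take _ pq). apply: In'_nth. by rewrite size_takel // ltnW.
have HsubP : sub P j = sub (take q P) j ++ Inv j (ORead x) :: Resp j (RVal v) :: sub (drop r.+1 P) j.
  rewrite -{1}(cat_take_drop q P) /sub filter_cat (drop_nth (Resp 0 ROk) qP) Eq /= eqxx.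
  congr (_ ++ _ :: _).
  rewrite -(cat_take_drop (r - q.+1) (drop q.+1 P)) filter_cat.
  rewrite (@filter_nil _ _ _ Hmid) /= drop_drop subnK // (drop_nth (Resp 0 ROk) rP) Er /= eqxx.
  done.
have [t Ht] := compl_prefix j (sub P j).
have HsubS : sub (vis S j) j = (sub (take q P) j) ++ Inv j (ORead x) :: Resp j (RVal v) :: (sub (drop r.+1 P) j ++ t).
  by rewrite sub_vis Heq HsubC Ht HsubP -catA.
have Rd := @execs_consec _ _ _ _ _ _ HsubS.
have occ : occurs S j.
  apply: (@In'_has _ _ (Inv j (ORead x))); last by rewrite /= eqxx.
  have : In' (Inv j (ORead x)) (sub S j).
    rewrite -sub_vis HsubS In'_cat; right; by left.
  by rewrite In'_filter => -[].
have L := Hleg j occ x.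
have Rd' : In' (ORead x, RVal v) [seq e <- execs (vis S j) | on_var x e].
  by rewrite In'_filter /on_var /= eqxx.
case: (@seq_legal_read _ _ _ _ L Rd') => [/eqP|[y' Hw]]; first by rewrite (negbTE v0).
move: Hw; rewrite In'_filter /= => -[/eqP Ey Hw]; subst y'.
have [k Hk] := @execs_inv _ _ _ Hw.
move: Hk; rewrite /vis In'_filter /= => -[Hpred Hk].
have HkS : In' (Inv k (OWrite x v)) (sub S k) by rewrite In'_filter /= eqxx.
move: HkS; rewrite Heq HsubC => /compl_in; rewrite In'_filter => -[_ HkP].
have HkH : In' (Inv k (OWrite x v)) H by apply: (@In'_take _ _ n).
have := @uniq_pmap_inj _ _ write_inv _ _ _ (x,v) U HkH Wi erefl erefl.
case=> Eki; subst k.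
move: Hpred; rewrite (negbTE ij) /= Heq HsubC compl_not_committed //.
Qed.
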